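(* Let $L\subseteq B_p$ be an integral lattice with $\mathbb{Z}\subseteq L$. Then \[\theta_L(q)=\Big(\sum_{\substack{\beta\in\tau(L)\\ N(\beta)\equiv 0\ (\mathrm{mod}\ 4)}}q^{N(\beta)/4}\Big)\theta_0(q)+\Big(\sum_{\substack{\beta\in\tau(L)\\ N(\beta)\equiv 3\ (\mathrm{mod}\ 4)}}q^{(1+N(\beta))/4}\Big)\theta_1(q).\]
   Context: $B_p$ is the quaternion algebra over $\mathbb{Q}$ ramified exactly at the prime $p$ and $\infty$, with canonical involution $\overline{x}$, reduced norm $N(x)=x\overline{x}$ and reduced trace $\mathrm{Tr}(x)=x+\overline{x}$. A lattice $L\subseteq B_p$ is integral if $N(x),\mathrm{Tr}(x)\in\mathbb{Z}$ for all $x\in L$. $\tau:B_p\to B_p$ is $\tau(x)=2x-\mathrm{Tr}(x)$ and $\tau(L)=\{\tau(x):x\in L\}$. $\theta_L(q)=\sum_{x\in L}q^{N(x)}$, $\theta_0(q)=\sum_{n\in\mathbb{Z}}q^{n^2}$, $\theta_1(q)=\sum_{n\in\mathbb{Z}}q^{n^2+n}$. *)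

(* Defs.v *)
From HB Require Import structures.
From mathcomp Require Import all_boot all_order all_algebra.
Set Implicit Arguments. Unset Strict Implicit. Unset Printing Implicit Defensive.
Import Order.TTheory GRing.Theory Num.Theory.
Local Open Scope ring_scope.

(* Quaternion algebra (a,b)_Q with basis 1,i,j,k, i^2=a, j^2=b, ij=-ji=k.
   An element is a 4-tuple (x0,x1,x2,x3) = x0 + x1 i + x2 j + x3 k. *)
Definition quat : Type := (rat * rat * rat * rat)%type.

Definition qmk (x0 x1 x2 x3 : rat) : quat := (x0, x1, x2, x3).
Definition q0 (x : quat) : rat := x.1.1.1.
Definition q1 (x : quat) : rat := x.1.1.2.
Definition q2 (x : quat) : rat := x.1.2.
Definition q3 (x : quat) : rat := x.2.

Definition qadd (x y : quat) : quat :=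
  qmk (q0 x + q0 y) (q1 x + q1 y) (q2 x + q2 y) (q3 x + q3 y).
Definition qscale (c : rat) (x : quat) : quat :=
  qmk (c * q0 x) (c * q1 x) (c * q2 x) (c * q3 x).
Definition qzero : quat := qmk 0 0 0 0.
Definition qscal (c : rat) : quat := qmk c 0 0 0.

Definition qmul (a b : rat) (x y : quat) : quat :=
  let: (x0, x1, x2, x3) := (q0 x, q1 x, q2 x, q3 x) in
  let: (y0, y1, y2, y3) := (q0 y, q1 y, q2 y, q3 y) in
  qmk (x0*y0 + a*x1*y1 + b*x2*y2 - a*b*x3*y3)
      (x0*y1 + x1*y0 - b*x2*y3 + b*x3*y2)
      (x0*y2 + x2*y0 + a*x1*y3 - a*x3*y1)
      (x0*y3 + x3*y0 + x1*y2 - x2*y1).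

Definition qconj (x : quat) : quat := qmk (q0 x) (- q1 x) (- q2 x) (- q3 x).

(* reduced norm N(x) = x * conj x and reduced trace Tr(x) = x + conj x;
   both are scalars (elements of Q.1); we return the rational scalar. *)
Definition qnorm (a b : rat) (x : quat) : rat := q0 (qmul a b x (qconj x)).
Definition qtrace (x : quat) : rat := q0 (qadd x (qconj x)).

Definition qtau (x : quat) : quat :=
  qadd (qscale 2 x) (qscal (- qtrace x)).

(* Standard presentation (Pizer) of the quaternion algebra B_p over Q
   ramified exactly at p and infinity, as (a,b)_Q. *)
Definition Bp_params (p : nat) (a b : rat) : Prop :=
  [\/ (p = 2%N /\ a = -1 /\ b = -1),
      (p %% 4 = 3)%N /\ a = -1 /\ b = - (p%:R),
      (p %% 8 = 5)%N /\ a = -2 /\ b = - (p%:R)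
    | (p %% 8 = 1)%N /\ exists q : nat,
        [/\ prime q, (q %% 4 = 3)%N,
            (forall x : nat, x ^ 2 %% q <> p %% q)%N,
            a = - (p%:R) & b = - (q%:R)]].

Definition is_lattice (L : quat -> Prop) : Prop :=
  exists e : 'I_4 -> quat,
    (forall c : 'I_4 -> rat,
        \big[qadd/qzero]_(i < 4) qscale (c i) (e i) = qzero ->
        forall i, c i = 0) /\
    (forall x, L x <-> exists z : 'I_4 -> int,
        x = \big[qadd/qzero]_(i < 4) qscale ((z i)%:~R) (e i)).

Definition is_int (r : rat) : Prop := exists z : int, r = z%:~R.

Definition integral_lattice (a b : rat) (L : quat -> Prop) : Prop :=
  forall x, L x -> is_int (qnorm a b x) /\ is_int (qtrace x).

Definition contains_Z (L : quat -> Prop) : Prop :=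
  forall z : int, L (qscal z%:~R).

Definition tau_set (L : quat -> Prop) : quat -> Prop :=
  fun y => exists x, L x /\ y = qtau x.

Definition ncard (T : eqType) (P : T -> Prop) (k : nat) : Prop :=
  exists s : seq T, [/\ uniq s, size s = k & forall x, x \in s <-> P x].

(* Main.v *)
Require Import Defs.
From mathcomp Require Import all_boot all_order all_algebra.
From mathcomp Require Import zify ring lra.
From Stdlib Require Import Classical ClassicalEpsilon.
Import Order.TTheory GRing.Theory Num.Theory.
Local Open Scope ring_scope.

Lemma quat_eq (x y : quat) : q0 x = q0 y -> q1 x = q1 y -> q2 x = q2 y -> q3 x = q3 y -> x = y.
Proof. by case: x => [[[? ?] ?] ?]; case: y => [[[? ?] ?] ?]; rewrite /q0 /q1 /q2 /q3 /= => -> -> -> ->. Qed.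

Lemma qnormE a b x : qnorm a b x = q0 x ^+ 2 - a * q1 x ^+ 2 - b * q2 x ^+ 2 + a * b * q3 x ^+ 2.
Proof. rewrite /qnorm /qmul /= /q0 /q1 /q2 /q3 /=. ring. Qed.

Lemma qtraceE x : qtrace x = 2 * q0 x.
Proof. rewrite /qtrace /qadd /qconj /q0 /=; ring. Qed.

Lemma qtauE x : qtau x = qmk 0 (2 * q1 x) (2 * q2 x) (2 * q3 x).
Proof. apply: quat_eq; rewrite /qtau ?qtraceE /qadd /qscale /qscal /q0 /q1 /q2 /q3 /=; ring. Qed.

Lemma q0sum (I : Type) (r : seq I) (P : pred I) (F : I -> quat) :
  q0 (\big[qadd/qzero]_(i <- r | P i) F i) = \sum_(i <- r | P i) q0 (F i).
Proof. exact: (big_morph q0 (id1 := 0) (op1 := +%R)). Qed.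
Lemma q1sum (I : Type) (r : seq I) (P : pred I) (F : I -> quat) :
  q1 (\big[qadd/qzero]_(i <- r | P i) F i) = \sum_(i <- r | P i) q1 (F i).
Proof. exact: (big_morph q1 (id1 := 0) (op1 := +%R)). Qed.
Lemma q2sum (I : Type) (r : seq I) (P : pred I) (F : I -> quat) :
  q2 (\big[qadd/qzero]_(i <- r | P i) F i) = \sum_(i <- r | P i) q2 (F i).
Proof. exact: (big_morph q2 (id1 := 0) (op1 := +%R)). Qed.
Lemma q3sum (I : Type) (r : seq I) (P : pred I) (F : I -> quat) :
  q3 (\big[qadd/qzero]_(i <- r | P i) F i) = \sum_(i <- r | P i) q3 (F i).
Proof. exact: (big_morph q3 (id1 := 0) (op1 := +%R)). Qed.


Lemma ncard_sub (T : eqType) (S : seq T) (P : T -> Prop) :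
  (forall x, P x -> x \in S) -> exists s : seq T, uniq s /\ forall x, x \in s <-> P x.
Proof.
elim: S P => [|y S IH] P HP.
  by exists [::]; split=> // x; split=> // /HP.
have H1 : forall x, P x /\ x != y -> x \in S.
  by move=> x [Px nxy]; move: (HP x Px); rewrite inE (negbTE nxy).
have [s [us Hs]] := IH (fun x => P x /\ x != y) H1.
case: (classic (P y)) => Py.
  exists (y :: s); split.
    by rewrite /= us andbT; apply/negP => /Hs [_ /eqP].
  move=> x; rewrite inE; split; first by case/orP => [/eqP -> //| /Hs []].
  by move=> Px; case: (x =P y) => [->|/eqP nxy]; rewrite ?eqxx //; apply/orP; right; apply/Hs.
exists s; split=> // x; rewrite Hs; split; first by case.
by move=> Px; split => //; apply/eqP => exy; apply: Py; rewrite -exy.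
Qed.
Lemma q0add x y : q0 (qadd x y) = q0 x + q0 y. Proof. by []. Qed.
Lemma q1add x y : q1 (qadd x y) = q1 x + q1 y. Proof. by []. Qed.
Lemma q2add x y : q2 (qadd x y) = q2 x + q2 y. Proof. by []. Qed.
Lemma q3add x y : q3 (qadd x y) = q3 x + q3 y. Proof. by []. Qed.
Lemma q0scale c x : q0 (qscale c x) = c * q0 x. Proof. by []. Qed.
Lemma q1scale c x : q1 (qscale c x) = c * q1 x. Proof. by []. Qed.
Lemma q2scale c x : q2 (qscale c x) = c * q2 x. Proof. by []. Qed.
Lemma q3scale c x : q3 (qscale c x) = c * q3 x. Proof. by []. Qed.
Lemma q0mk a b c d : q0 (qmk a b c d) = a. Proof. by []. Qed.
Lemma q1mk a b c d : q1 (qmk a b c d) = b. Proof. by []. Qed.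
Lemma q2mk a b c d : q2 (qmk a b c d) = c. Proof. by []. Qed.
Lemma q3mk a b c d : q3 (qmk a b c d) = d. Proof. by []. Qed.
Lemma qscalE c : qscal c = qmk c 0 0 0. Proof. by []. Qed.
Definition qE := (q0add, q1add, q2add, q3add, q0scale, q1scale, q2scale, q3scale,
  q0mk, q1mk, q2mk, q3mk, qscalE, q0sum, q1sum, q2sum, q3sum).

Lemma lattice_add L x y : is_lattice L -> L x -> L y -> L (qadd x y).
Proof.
case=> e [_ HL] /HL [z ->] /HL [w ->]; apply/HL; exists (fun i => z i + w i).
apply: quat_eq; rewrite ?qE -big_split /=;
  apply: eq_bigr => i _ /=; rewrite ?qE intrD; ring.
Qed.

Lemma is_intZ (z : int) : is_int z%:~R. Proof. by exists z. Qed.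
Lemma is_intD x y : is_int x -> is_int y -> is_int (x + y).
Proof. by case=> u -> [v ->]; exists (u + v); rewrite intrD. Qed.
Lemma is_intM x y : is_int x -> is_int y -> is_int (x * y).
Proof. by case=> u -> [v ->]; exists (u * v); rewrite intrM. Qed.

Lemma dens (s : seq rat) : exists d : nat, (0 < d)%N /\ forall r, r \in s -> is_int (d%:R * r).
Proof.
elim: s => [|r s [d [d0 Hd]]]; first by exists 1%N.
exists (d * `|denq r|)%N; split; first by rewrite muln_gt0 d0 absz_gt0 denq_eq0.
move=> x; rewrite inE => /orP [/eqP ->|xs].
  rewrite natrM -mulrA -[(`|denq r|%:R : rat)]/((`|denq r|%:Z)%:~R) gez0_abs ?ltW ?denq_gt0 //.
  rewrite [_ * r]mulrC -numqE; apply: is_intM; [exact: (is_intZ d) | exact: is_intZ].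
rewrite natrM mulrAC; apply: is_intM; [exact: Hd | exact: (is_intZ `|denq r|)].
Qed.

Lemma lattice_den L : is_lattice L -> exists d : nat, (0 < d)%N /\ forall x, L x ->
  [/\ is_int (d%:R * q0 x), is_int (d%:R * q1 x), is_int (d%:R * q2 x) & is_int (d%:R * q3 x)].
Proof.
case=> e [_ HL].
have [d [d0 Hd]] := dens ([seq q0 (e i) | i <- enum 'I_4] ++ [seq q1 (e i) | i <- enum 'I_4] ++
   [seq q2 (e i) | i <- enum 'I_4] ++ [seq q3 (e i) | i <- enum 'I_4]).
exists d; split => // x /HL [z ->]; rewrite !qE !mulr_sumr.
split; apply: (big_ind is_int); (try exact: is_intD); (try exact: (is_intZ 0));
  move=> i _; rewrite !qE mulrCA; apply: is_intM; (try exact: is_intZ); apply: Hd;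
  rewrite !mem_cat; apply/or4P; first [apply: Or41; apply: (map_f (fun j => q0 (e j)))
    | apply: Or42; apply: (map_f (fun j => q1 (e j))) | apply: Or43; apply: (map_f (fun j => q2 (e j)))
    | apply: Or44; apply: (map_f (fun j => q3 (e j)))]; by rewrite mem_enum.
Qed.

Lemma params_neg p a b : prime p -> Bp_params p a b -> a <= -1 /\ b <= -1.
Proof.
move=> pp; have p1 : 1 <= (p%:R : rat) by rewrite ler1n prime_gt0.
case=> [[_ [-> ->]]|[_ [-> ->]]|[_ [-> ->]]|[_ [q [qp _ _ -> ->]]]]; split; rewrite ?lerN2 //.
by rewrite ler1n prime_gt0.
Qed.

Lemma norm_ge a b x : a <= -1 -> b <= -1 ->
  [/\ q0 x ^+ 2 <= qnorm a b x, q1 x ^+ 2 <= qnorm a b x, q2 x ^+ 2 <= qnorm a b x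
    & q3 x ^+ 2 <= qnorm a b x].
Proof.
move=> ha hb; rewrite qnormE.
have h0 := sqr_ge0 (q0 x); have h1 := sqr_ge0 (q1 x); have h2 := sqr_ge0 (q2 x);
have h3 := sqr_ge0 (q3 x).
have e1 : q1 x ^+ 2 <= - a * q1 x ^+ 2 by rewrite -[X in X <= _]mul1r ler_wpM2r // lerNr.
have e2 : q2 x ^+ 2 <= - b * q2 x ^+ 2 by rewrite -[X in X <= _]mul1r ler_wpM2r // lerNr.
have ab : 1 <= a * b.
  have : 0 <= (-a - 1) * (-b - 1) by apply: mulr_ge0; rewrite subr_ge0 lerNr.
  lra.
have e3 : q3 x ^+ 2 <= a * b * q3 x ^+ 2 by rewrite -[X in X <= _]mul1r ler_wpM2r.
split; lra.
Qed.



Definition intlist (K : nat) : seq int := [seq i%:Z - K%:Z | i <- iota 0 (2*K).+1].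
Lemma int_range (K : nat) (m : int) : `|m| <= K%:Z -> m \in intlist K.
Proof.
move=> Hm; apply/mapP; exists (absz (m + K%:Z)); rewrite ?mem_iota; lia.
Qed.
Definition ratlist (d K : nat) : seq rat := [seq z%:~R / d%:R | z <- intlist K].

Lemma bound_good (d M : nat) (r : rat) : (0 < d)%N -> is_int (d%:R * r) -> r ^+ 2 <= M%:R ->
  r \in ratlist d (d * M.+1).
Proof.
move=> d0 [m Hm] hr.
have dn0 : (d%:R : rat) != 0 by rewrite pnatr_eq0 -lt0n.
have -> : r = m%:~R / d%:R by rewrite -Hm mulrAC mulfV ?mul1r.
apply: (map_f (fun z : int => z%:~R / (d%:R : rat))); apply: int_range.
have : (m ^+ 2)%:~R <= ((M * d ^ 2)%N)%:R :> rat.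
  rewrite expr2 intrM -expr2 -Hm natrM natrX exprMn mulrC ler_wpM2r // exprn_ge0 // ler0n.
move=> H; have hle : (m ^+ 2 <= (M * d ^ 2)%N%:Z).
  by move: H; rewrite -[((M*d^2)%N)%:R]/(((M*d^2)%N%:Z)%:~R : rat) ler_int.
nia.
Qed.

Definition grid (R : seq rat) : seq quat :=
  [seq (xy, w) | xy <- [seq (x, c) | x <- [seq (u, v) | u <- R, v <- R], c <- R], w <- R].

Lemma in_grid R x : q0 x \in R -> q1 x \in R -> q2 x \in R -> q3 x \in R -> x \in grid R.
Proof.
case: x => [[[u v] c] w]; rewrite /q0 /q1 /q2 /q3 /= => hu hv hc hw.
by apply: allpairs_f => //; apply: allpairs_f => //; apply: allpairs_f.
Qed.

Lemma finite_quat (P : quat -> Prop) (d M : nat) : (0 < d)%N ->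
  (forall x, P x -> [/\ is_int (d%:R * q0 x), is_int (d%:R * q1 x), is_int (d%:R * q2 x)
     & is_int (d%:R * q3 x)] /\
     [/\ q0 x ^+ 2 <= M%:R, q1 x ^+ 2 <= M%:R, q2 x ^+ 2 <= M%:R & q3 x ^+ 2 <= M%:R]) ->
  exists s : seq quat, uniq s /\ forall x, x \in s <-> P x.
Proof.
move=> d0 H; apply: (@ncard_sub _ (grid (ratlist d (d * M.+1)))) => x /H [[i0 i1 i2 i3] [b0 b1 b2 b3]].
by apply: in_grid; apply: bound_good.
Qed.

Lemma finite_int (P : int -> Prop) (K : nat) : (forall z, P z -> `|z| <= K%:Z) ->
  exists s : seq int, uniq s /\ forall x, x \in s <-> P x.
Proof. by move=> H; apply: (@ncard_sub _ (intlist K)) => z /H; apply: int_range. Qed.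


Lemma par_int (T N : int) : T ^+ 2 = 4 * N -> exists u, T = 2 * u.
Proof.
move=> H; exists (T %/ 2)%Z.
have e := divz_eq T 2; have h1 := modz_ge0 T (isT : (2:int) != 0);
have h2 := ltz_pmod T (isT : (0:int) < 2).
set u := (T %/ 2)%Z in e *; set r := (T %% 2)%Z in e h1 h2 *.
have : r = 0 \/ r = 1 by lia.
case=> hr; rewrite hr in e; first lia.
exfalso; rewrite e in H; nia.
Qed.

Lemma par_int1 (T N : int) : T ^+ 2 = 4 * N + 1 -> exists u, T = 2 * u + 1.
Proof.
move=> H; exists (T %/ 2)%Z.
have e := divz_eq T 2; have h1 := modz_ge0 T (isT : (2:int) != 0);
have h2 := ltz_pmod T (isT : (0:int) < 2).
set u := (T %/ 2)%Z in e *; set r := (T %% 2)%Z in e h1 h2 *.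
have : r = 0 \/ r = 1 by lia.
case=> hr; rewrite hr in e; last lia.
exfalso; rewrite e in H; nia.
Qed.

Definition f0 (beta : quat) (z : int) : quat := qmk z%:~R (q1 beta / 2) (q2 beta / 2) (q3 beta / 2).
Definition f1 (beta : quat) (z : int) : quat := qmk (z%:~R + 2^-1) (q1 beta / 2) (q2 beta / 2) (q3 beta / 2).

Lemma intr_sq (z : int) : (z ^+ 2)%:~R = (z%:~R : rat) ^+ 2.
Proof. by rewrite !expr2 intrM. Qed.

Lemma tau_q0 x : q0 (qtau x) = 0. Proof. by rewrite qtauE. Qed.
Lemma tau_norm a b x : qnorm a b (qtau x) = 4 * (qnorm a b x - q0 x ^+ 2).
Proof. rewrite !qnormE qtauE !q0mk !q1mk !q2mk !q3mk. ring. Qed.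
Lemma f0_norm a b beta z : q0 beta = 0 -> qnorm a b (f0 beta z) = z%:~R ^+ 2 + qnorm a b beta / 4.
Proof. move=> h; rewrite !qnormE /f0 !q0mk !q1mk !q2mk !q3mk h. by field. Qed.
Lemma f1_norm a b beta z : q0 beta = 0 -> qnorm a b (f1 beta z) = (z%:~R + 2^-1) ^+ 2 + qnorm a b beta / 4.
Proof. move=> h; rewrite !qnormE /f1 !q0mk !q1mk !q2mk !q3mk h. by field. Qed.
Lemma f0_tau x z : f0 (qtau x) z = qadd x (qscal (z%:~R - q0 x)).
Proof. apply: quat_eq; rewrite /f0 qtauE !qE; by field. Qed.
Lemma f1_tau x z : f1 (qtau x) z = qadd x (qscal (z%:~R + 2^-1 - q0 x)).
Proof. apply: quat_eq; rewrite /f1 qtauE !qE; by field. Qed.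

Lemma sq_eq_int (T Ny : int) (k : nat) (y0 N : rat) : T%:~R = 2 * y0 -> Ny%:~R = N ->
  4 * (N - y0^+2) = (4 * k)%N%:R -> T ^+ 2 = 4 * (Ny - k%:Z).
Proof.
move=> eT eN H.
apply: (intr_inj (R := rat)). rewrite intr_sq intrM intrB eT eN. rewrite natrM in H.
rewrite (_ : (4:int)%:~R = 4 :> rat) // (_ : (k%:Z)%:~R = k%:R :> rat) //. nra.
Qed.

Lemma sq_eq_int1 (T Ny : int) (k : nat) (y0 N : rat) : T%:~R = 2 * y0 -> Ny%:~R = N ->
  4 * (N - y0^+2) = (4 * k)%N%:R - 1 -> T ^+ 2 = 4 * (Ny - k%:Z) + 1.
Proof.
move=> eT eN H.
apply: (intr_inj (R := rat)). rewrite intrD intr_sq intrM intrB eT eN. rewrite natrM in H.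
rewrite (_ : (4:int)%:~R = 4 :> rat) // (_ : (k%:Z)%:~R = k%:R :> rat) //. nra.
Qed.

Lemma fwd0 a b L (n k : nat) y (z : int) : is_lattice L -> integral_lattice a b L -> contains_Z L ->
  L y -> qnorm a b (qtau y) = (4 * k)%N%:R -> z ^+ 2 = (n - k)%N%:Z -> (k <= n)%N ->
  L (f0 (qtau y) z) /\ qnorm a b (f0 (qtau y) z) = n%:R.
Proof.
move=> hl hi hz Ly hN hzz hk.
have [[Ny eN] [T eT]] := hi y Ly.
rewrite qtraceE in eT; rewrite tau_norm in hN.
have [u hu] := @par_int _ _ (@sq_eq_int T Ny k _ _ (esym eT) (esym eN) hN).
have y0u : q0 y = u%:~R.
  by apply: (mulfI (isT : (2:rat) != 0)); rewrite eT hu intrM.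
split.
  rewrite f0_tau y0u -intrB; exact: lattice_add.
rewrite f0_norm ?tau_q0 // tau_norm -intr_sq hzz.
rewrite (_ : ((n - k)%N%:Z)%:~R = (n - k)%N%:R :> rat) // natrB //.
rewrite natrM in hN; rewrite hN; by field.
Qed.

Lemma fwd1 a b L (n k : nat) y (z : int) : is_lattice L -> integral_lattice a b L -> contains_Z L ->
  L y -> qnorm a b (qtau y) = (4 * k)%N%:R - 1 -> z ^+ 2 + z = (n - k)%N%:Z -> (k <= n)%N ->
  L (f1 (qtau y) z) /\ qnorm a b (f1 (qtau y) z) = n%:R.
Proof.
move=> hl hi hz Ly hN hzz hk.
have [[Ny eN] [T eT]] := hi y Ly.
rewrite qtraceE in eT; rewrite tau_norm in hN.
have [u hu] := @par_int1 _ _ (@sq_eq_int1 T Ny k _ _ (esym eT) (esym eN) hN).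
have y0u : q0 y = u%:~R + 2^-1.
  apply: (mulfI (isT : (2:rat) != 0)); rewrite eT hu intrD intrM. by field.
split.
  rewrite f1_tau y0u (_ : z%:~R + 2^-1 - (u%:~R + 2^-1) = (z - u)%:~R); last by rewrite intrB; ring.
  exact: lattice_add.
rewrite f1_norm ?tau_q0 // tau_norm.
have : ((z ^+ 2 + z)%:~R : rat) = (n - k)%N%:R by rewrite hzz.
rewrite intrD intr_sq natrB // => hz2.
rewrite natrM in hN; rewrite hN; nra.
Qed.

Lemma rev_mem a b L (n : nat) x : a <= -1 -> b <= -1 -> integral_lattice a b L ->
  L x -> qnorm a b x = n%:R ->
  (exists (k : nat) (z : int), [/\ (k <= n)%N, qnorm a b (qtau x) = (4 * k)%N%:R,
      z ^+ 2 = (n - k)%N%:Z & x = f0 (qtau x) z]) \/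
  (exists (k : nat) (z : int), [/\ (1 <= k <= n)%N, qnorm a b (qtau x) = (4 * k)%N%:R - 1,
      z ^+ 2 + z = (n - k)%N%:Z & x = f1 (qtau x) z]).
Proof.
move=> ha hb hi Lx hn.
have [_ [T eT]] := hi x Lx; rewrite qtraceE in eT.
have [h0 _ _ _] := @norm_ge a b (qtau x) ha hb.
rewrite tau_q0 tau_norm hn in h0.
have e := divz_eq T 2; have h1 := modz_ge0 T (isT : (2:int) != 0);
have h2 := ltz_pmod T (isT : (0:int) < 2).
set u := (T %/ 2)%Z in e *; set r := (T %% 2)%Z in e h1 h2 *.
have : r = 0 \/ r = 1 by lia.
case=> hr; rewrite hr in e.
- have x0u : q0 x = u%:~R.
    by apply: (mulfI (isT : (2:rat) != 0)); rewrite eT e addr0 mulrC intrM.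
  have hle : u ^+ 2 <= n%:Z.
    rewrite -(ler_int rat) intr_sq -x0u; rewrite (_ : (n%:Z)%:~R = n%:R :> rat) //. nra.
  left; exists (absz (n%:Z - u ^+ 2)); exists u.
  move: hle; set w := u ^+ 2 => hle.
  have w0 : 0 <= w by rewrite /w sqr_ge0.
  have hk : (absz (n%:Z - w))%:Z = n%:Z - w by lia.
  split.
  + lia.
  + rewrite tau_norm hn x0u -intr_sq -/w natrM.
    rewrite (_ : (`|n%:Z - w|%N%:R : rat) = (`|n%:Z - w|%N%:Z)%:~R) // hk intrB.
    by rewrite (_ : (n%:Z)%:~R = n%:R :> rat).
  + lia.
  + apply: quat_eq; rewrite /f0 qtauE !qE ?x0u //; by field.
- have x0u : q0 x = u%:~R + 2^-1.
    apply: (mulfI (isT : (2:rat) != 0)); rewrite eT e intrD intrM; by field.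
  have hle : u ^+ 2 + u < n%:Z.
    rewrite -(ltr_int rat) intrD intr_sq.
    rewrite (_ : (n%:Z)%:~R = n%:R :> rat) //. rewrite x0u in h0. nra.
  right; exists (absz (n%:Z - (u ^+ 2 + u)%R)); exists u.
  have w0 : 0 <= u ^+ 2 + u by nia.
  move: hle w0; set w := u ^+ 2 + u => hle w0.
  have hk : (absz (n%:Z - w))%:Z = n%:Z - w by lia.
  split.
  + lia.
  + rewrite tau_norm hn x0u natrM.
    rewrite (_ : (`|n%:Z - w|%N%:R : rat) = (`|n%:Z - w|%N%:Z)%:~R) // hk intrB /w intrD intr_sq.
    rewrite (_ : (n%:Z)%:~R = n%:R :> rat) //. by field.
  + lia.
  + apply: quat_eq; rewrite /f1 qtauE !qE ?x0u //; by field.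
Qed.

Lemma tau_fin a b L (K : nat) (M : rat) : a <= -1 -> b <= -1 -> is_lattice L -> M <= K%:R ->
  exists s : seq quat, uniq s /\ forall y, y \in s <-> (tau_set L y /\ qnorm a b y = M).
Proof.
move=> ha hb hl hM; have [d [d0 Hd]] := lattice_den _ hl.
apply: (@finite_quat _ d K d0) => y [[x [Lx ->]] hN].
have [i0 i1 i2 i3] := Hd x Lx.
have [b0 b1 b2 b3] := @norm_ge a b (qtau x) ha hb.
rewrite hN in b0 b1 b2 b3.
split; last by split; apply: le_trans hM.
rewrite qtauE !qE mulr0; split; first exact: (is_intZ 0);
  rewrite mulrCA; apply: is_intM => //; exact: (is_intZ 2).
Qed.

Lemma choose_fun (T : eqType) (P : nat -> T -> Prop) :
  (forall k, exists s : seq T, uniq s /\ forall x, x \in s <-> P k x) ->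
  exists F : nat -> seq T, forall k, uniq (F k) /\ forall x, x \in F k <-> P k x.
Proof.
move=> H; exists (fun k => proj1_sig (constructive_indefinite_description _ (H k))).
by move=> k; case: (constructive_indefinite_description _ (H k)).
Qed.


Lemma f0_inj y1 y2 z1 z2 : q0 y1 = 0 -> q0 y2 = 0 -> f0 y1 z1 = f0 y2 z2 -> y1 = y2 /\ z1 = z2.
Proof.
move=> h1 h2 e; split.
  apply: quat_eq; rewrite ?h1 ?h2 //.
  - by have := congr1 q1 e; rewrite /f0 !q1mk => /(mulIf (isT : (2^-1 : rat) != 0)).
  - by have := congr1 q2 e; rewrite /f0 !q2mk => /(mulIf (isT : (2^-1 : rat) != 0)).
  - by have := congr1 q3 e; rewrite /f0 !q3mk => /(mulIf (isT : (2^-1 : rat) != 0)).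
by have := congr1 q0 e; rewrite /f0 !q0mk => /intr_inj.
Qed.

Lemma f1_inj y1 y2 z1 z2 : q0 y1 = 0 -> q0 y2 = 0 -> f1 y1 z1 = f1 y2 z2 -> y1 = y2 /\ z1 = z2.
Proof.
move=> h1 h2 e; split.
  apply: quat_eq; rewrite ?h1 ?h2 //.
  - by have := congr1 q1 e; rewrite /f1 !q1mk => /(mulIf (isT : (2^-1 : rat) != 0)).
  - by have := congr1 q2 e; rewrite /f1 !q2mk => /(mulIf (isT : (2^-1 : rat) != 0)).
  - by have := congr1 q3 e; rewrite /f1 !q3mk => /(mulIf (isT : (2^-1 : rat) != 0)).
by have := congr1 q0 e; rewrite /f1 !q0mk => /addIr /intr_inj.
Qed.

Lemma f01_neq y1 y2 z1 z2 : f1 y1 z1 <> f0 y2 z2.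
Proof.
move=> e; have := congr1 q0 e; rewrite /f0 /f1 !q0mk => h.
have : ((2 * (z2 - z1))%:~R : rat) = 1.
  by rewrite intrM intrB -h (_ : (2:int)%:~R = 2 :> rat) //; field.
rewrite (_ : (1 : rat) = (1 : int)%:~R) // => /intr_inj; lia.
Qed.

Lemma abs_le_sq (z : int) (m : nat) : z ^+ 2 = m%:Z -> `|z| <= m%:Z.
Proof. move=> h; rewrite -h expr2; case: (lerP 0 z) => hz0; nia. Qed.
Lemma abs_le_sq1 (z : int) (m : nat) : z ^+ 2 + z = m%:Z -> `|z| <= m.+1%:Z.
Proof. move=> h; have : z ^+ 2 + z + 1 = m.+1%:Z by rewrite h; lia.
 move=> <-; rewrite expr2; case: (lerP 0 z) => hz0; nia. Qed.

Theorem lemma4p1 (p : nat) (a b : rat) (L : quat -> Prop) :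
  prime p -> Bp_params p a b ->
  is_lattice L -> integral_lattice a b L -> contains_Z L ->
  forall n : nat,
  exists (r : nat) (ca cb t0 t1 : nat -> nat),
    ncard (fun x : quat => L x /\ qnorm a b x = n%:R) r /\
        (forall k : nat, (k <= n)%N ->
           ncard (fun y : quat => tau_set L y /\ qnorm a b y = (4 * k)%N%:R) (ca k)) /\
        (forall k : nat, (1 <= k <= n)%N ->
           ncard (fun y : quat => tau_set L y /\ qnorm a b y = (4 * k)%N%:R - 1) (cb k)) /\
        (forall m : nat, (m <= n)%N ->
           ncard (fun z : int => z ^+ 2 = m%:Z) (t0 m)) /\
        (forall m : nat, (m <= n)%N ->
           ncard (fun z : int => z ^+ 2 + z = m%:Z) (t1 m)) /\
      r = (\sum_(0 <= k < n.+1) ca k * t0 (n - k)%N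
             + \sum_(1 <= k < n.+1) cb k * t1 (n - k)%N)%N.
Proof.
move=> pp hpar hl hi hz n.
have [ha hb] := @params_neg _ _ _ pp hpar.
have [B hB] := @choose_fun _ (fun k y => tau_set L y /\ qnorm a b y = (4 * k)%N%:R)
  (fun k => @tau_fin a b L (4 * k) _ ha hb hl (lexx _)).
have hC : forall k : nat, ((4 * k)%N%:R - 1 : rat) <= (4 * k)%N%:R by move=> k; lra.
have [C hCC] := @choose_fun _ (fun k y => tau_set L y /\ qnorm a b y = (4 * k)%N%:R - 1)
  (fun k => @tau_fin a b L (4 * k) _ ha hb hl (hC k)).
have [Z0 hZ0] := @choose_fun _ (fun m (z : int) => z ^+ 2 = m%:Z)
  (fun m => @finite_int _ m (fun z hz => @abs_le_sq z m hz)).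
have [Z1 hZ1] := @choose_fun _ (fun m (z : int) => z ^+ 2 + z = m%:Z)
  (fun m => @finite_int _ m.+1 (fun z hz => @abs_le_sq1 z m hz)).
set S0 := [seq f0 bz.1 bz.2 | k <- index_iota 0 n.+1, bz <- [seq (y, z) | y <- B k, z <- Z0 (n - k)%N]].
set S1 := [seq f1 bz.1 bz.2 | k <- index_iota 1 n.+1, bz <- [seq (y, z) | y <- C k, z <- Z1 (n - k)%N]].
exists (size (S0 ++ S1)), (fun k => size (B k)), (fun k => size (C k)),
  (fun m => size (Z0 m)), (fun m => size (Z1 m)).
split.
  exists (S0 ++ S1); split => //.
  - rewrite cat_uniq; apply/and3P; split.
    + apply: allpairs_uniq_dep; first by rewrite /index_iota iota_uniq.
        move=> k _; apply: allpairs_uniq; [by case: (hB k) | by case: (hZ0 (n - k)%N) |].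
        by move=> [? ?] [? ?] _ _ /= [-> ->].
      move=> p1 p2 /allpairsPdep [k1 [bz1 [hk1 hbz1 ->]]] /allpairsPdep [k2 [bz2 [hk2 hbz2 ->]]] /=.
      move: hbz1 hbz2 => /allpairsP [[y1 z1] [hy1 hz1 ->]] /allpairsP [[y2 z2] [hy2 hz2 ->]] /= e.
      have [_ /(_ y1) [/(_ hy1) [[x1 [_ ex1]] hn1] _]] := hB k1.
      have [_ /(_ y2) [/(_ hy2) [[x2 [_ ex2]] hn2] _]] := hB k2.
      have [ey ez] := @f0_inj y1 y2 z1 z2 ltac:(by rewrite ex1 tau_q0)
        ltac:(by rewrite ex2 tau_q0) e.
      have ek : k1 = k2.
        by move: hn1; rewrite ey hn2 => /eqP; rewrite eqr_nat => /eqP; lia.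
      by subst k2; rewrite ey ez.
    + apply/hasPn => x /allpairsPdep [k [bz [_ hbz ->]]].
      move: hbz => /allpairsP [[y z] [_ _ ->]] /=; apply/negP.
      move=> /allpairsPdep [k' [bz' [_ hbz' e]]]; move: hbz' => /allpairsP [[y' z'] [_ _ e']].
      subst bz'; simpl in e. move: e; exact: f01_neq.
    + apply: allpairs_uniq_dep; first by rewrite /index_iota iota_uniq.
        move=> k _; apply: allpairs_uniq; [by case: (hCC k) | by case: (hZ1 (n - k)%N) |].
        by move=> [? ?] [? ?] _ _ /= [-> ->].
      move=> p1 p2 /allpairsPdep [k1 [bz1 [hk1 hbz1 ->]]] /allpairsPdep [k2 [bz2 [hk2 hbz2 ->]]] /=.
      move: hbz1 hbz2 => /allpairsP [[y1 z1] [hy1 hz1 ->]] /allpairsP [[y2 z2] [hy2 hz2 ->]] /= e.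
      have [_ /(_ y1) [/(_ hy1) [[x1 [_ ex1]] hn1] _]] := hCC k1.
      have [_ /(_ y2) [/(_ hy2) [[x2 [_ ex2]] hn2] _]] := hCC k2.
      have [ey ez] := @f1_inj y1 y2 z1 z2 ltac:(by rewrite ex1 tau_q0)
        ltac:(by rewrite ex2 tau_q0) e.
      have ek : k1 = k2.
        by move: hn1; rewrite ey hn2 => /addIr /eqP; rewrite eqr_nat => /eqP; lia.
      by subst k2; rewrite ey ez.
  - move=> x; rewrite mem_cat; split.
    + case/orP.
      * move=> /allpairsPdep [k [bz [hk hbz ->]]].
        move: hbz => /allpairsP [[y z] [hy hzz ->]] /=.
        have [_ /(_ y) [/(_ hy) [[x1 [Lx1 ->]] hn1] _]] := hB k.
        have [_ /(_ z) [/(_ hzz) hz1 _]] := hZ0 (n - k)%N.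
        rewrite mem_index_iota in hk.
        exact: (@fwd0 a b L n k x1 z hl hi hz Lx1 hn1 hz1 ltac:(lia)).
      * move=> /allpairsPdep [k [bz [hk hbz ->]]].
        move: hbz => /allpairsP [[y z] [hy hzz ->]] /=.
        have [_ /(_ y) [/(_ hy) [[x1 [Lx1 ->]] hn1] _]] := hCC k.
        have [_ /(_ z) [/(_ hzz) hz1 _]] := hZ1 (n - k)%N.
        rewrite mem_index_iota in hk.
        exact: (@fwd1 a b L n k x1 z hl hi hz Lx1 hn1 hz1 ltac:(lia)).
    + move=> [Lx hn].
      case: (@rev_mem a b L n x ha hb hi Lx hn) => [[k [z [hk hN hzz ex]]]|[k [z [hk hN hzz ex]]]].
      * apply/orP; left; apply/allpairsPdep; exists k, (qtau x, z); split.
        -- by rewrite mem_index_iota; lia.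
        -- apply: allpairs_f.
           ++ by have [_ /(_ (qtau x)) [_ ->]] := hB k; split => //; exists x.
           ++ by have [_ /(_ z) [_ ->]] := hZ0 (n - k)%N.
        -- exact: ex.
      * apply/orP; right; apply/allpairsPdep; exists k, (qtau x, z); split.
        -- by rewrite mem_index_iota; lia.
        -- apply: allpairs_f.
           ++ by have [_ /(_ (qtau x)) [_ ->]] := hCC k; split => //; exists x.
           ++ by have [_ /(_ z) [_ ->]] := hZ1 (n - k)%N.
        -- exact: ex.
split; first by move=> k _; exists (B k); have [u h] := hB k.
split; first by move=> k _; exists (C k); have [u h] := hCC k.
split; first by move=> k _; exists (Z0 k); have [u h] := hZ0 k.
split; first by move=> k _; exists (Z1 k); have [u h] := hZ1 k.
rewrite size_cat !size_allpairs_dep; congr (_ + _)%N; rewrite sumnE big_map;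
  apply: eq_bigr => k _; exact: size_allpairs.
Qed.
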